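(* Let $x_1\in\mathbb{R}$, $x_2\in\mathbb{R}\cup\{+\infty\}$ with $x_1<x_2$, let $D=[x_1,x_2)$, and let $f:D\to\mathbb{R}$ be ordinal decreasing with $f(x)>0$ for all $x\in D$. Define points $p_\alpha$ for ordinals $\alpha$ by $p_0=x_1$, $p_{\alpha+1}=\max\{y\le x_2:\ x-f(x)<p_\alpha\text{ for all }x\in D\text{ with }x<y\}$, and $p_\alpha=\sup_{\beta<\alpha}p_\beta$ for limit $\alpha$, and define intervals $I_\alpha=[p_\alpha,p_{\alpha+1})$. These intervals partition $D$, and the ordinal number of (nonempty) intervals $I_\alpha$ in this partition is at most $\omega\cdot(o(f|_D)+1)$.
   Context: For $h:E\to\mathbb{R}$, a strictly decreasing sequence $x_1>x_2>\cdots$ in $E$ is $h$-bad if $h(x_1)>h(x_2)>\cdots$; $h$ is ordinal decreasing if there is no infinite $h$-bad sequence. For ordinal decreasing $h$, the tree $T_h$ has a vertex for each finite $h$-bad sequence (the empty sequence being the root), the parent of $\langle x_1>\cdots>x_n\rangle$ being $\langle x_1>\cdots>x_{n-1}\rangle$; each vertex gets the ordinal height $o(v)=\sup_{w\text{ child of }v}(o(w)+1)$, and $o(h)$ is the height of the root. $o(f|_D)$ is the ordinal type of the restriction of $f$ to $D$. Maxima/suprema are taken in $\mathbb{R}\cup\{+\infty\}$. *)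

(* Defs.v *)
From HB Require Import structures.
From mathcomp Require Import all_boot all_order all_algebra.
From mathcomp Require Import boolp classical_sets reals constructive_ereal ereal.
From Stdlib Require Import ClassicalEpsilon.

Set Implicit Arguments.
Unset Strict Implicit.
Unset Printing Implicit Defensive.

Import Order.TTheory GRing.Theory Num.Theory.
Local Open Scope classical_set_scope.
Local Open Scope ring_scope.

(* Ordinals, encoded as (Aczel/Brouwer-style) well-founded trees with
   arbitrary index types:  [olim A f]  denotes the least ordinal that is
   strictly greater than every [f a], i.e.  sup_{a : A} (f a + 1).
   Ordinals are compared with the (extensional) relations [ole]/[olt]. *)

Inductive Ord : Type := olim : forall (A : Type), (A -> Ord) -> Ord.

Fixpoint ole (x y : Ord) {struct x} : Prop :=
  match x with
  | olim A f => forall a : A,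
      match y with olim B g => exists b : B, ole (f a) (g b) end
  end.

Definition olt (x y : Ord) : Prop :=
  match y with olim B g => exists b : B, ole x (g b) end.

Definition ozero : Ord := olim (False_rect Ord).
Definition osucc (x : Ord) : Ord := olim (fun _ : unit => x).
Definition ofin (n : nat) : Ord := iter n osucc ozero.
Definition oomega : Ord := olim ofin.

Definition oidx (x : Ord) : Type := match x with olim A _ => A end.
Definition ochild (x : Ord) : oidx x -> Ord :=
  match x return oidx x -> Ord with olim A f => f end.

(* (non-strict) supremum of a family of ordinals *)
Definition osup (B : Type) (h : B -> Ord) : Ord :=
  olim (fun p : {b : B & oidx (h b)} => ochild (projT2 p)).

(* ordinal addition: a + sup_b (g b + 1) = sup (a, sup_b (a + g b + 1)) *)
Fixpoint oadd (a b : Ord) {struct b} : Ord :=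
  match b with
  | olim B g =>
      match a with
      | olim A f => olim (fun s : A + B =>
                      match s with inl x => f x | inr y => oadd a (g y) end)
      end
  end.

(* ordinal multiplication: a * sup_b (g b + 1) = sup_b (a * g b + a) *)
Fixpoint omul (a b : Ord) {struct b} : Ord :=
  match b with
  | olim B g => osup (fun y : B => oadd (omul a (g y)) a)
  end.

Section OrdDecr.
Variable R : realType.

Definition bad_seq (E : set R) (h : R -> R) (u : nat -> R) : Prop :=
  forall n, E (u n) /\ u n.+1 < u n /\ h (u n.+1) < h (u n).

Definition ordinal_decreasing (E : set R) (h : R -> R) : Prop :=
  ~ exists u : nat -> R, bad_seq E h u.

(* finite h-bad sequences <x_1 > ... > x_n> in E (the vertices of T_h) *)
Definition bad_list (E : set R) (h : R -> R) (s : seq R) : Prop :=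
  (forall x, x \in s -> E x) /\
  sorted (fun x y => (y < x) && (h y < h x)) s.

Definition tchild (E : set R) (h : R -> R) (s t : seq R) : Prop :=
  bad_list E h t /\ exists x, t = rcons s x.

Inductive IsHeight (E : set R) (h : R -> R) : seq R -> Ord -> Prop :=
| IsHeight_intro (s : seq R) (g : {t : seq R | tchild E h s t} -> Ord) :
    (forall t, IsHeight E h (sval t) (g t)) ->
    IsHeight E h s (olim g).

Definition o_tree (E : set R) (h : R -> R) : Ord :=
  epsilon (inhabits ozero) (IsHeight E h [::]).

Local Open Scope ereal_scope.

Definition domD (x1 : R) (x2 : \bar R) : set R :=
  [set x : R | (x1 <= x)%R /\ x%:E < x2].

(* p_{alpha+1} from p = p_alpha: the max (= sup; the set is downward closed)
   of { y <= x2 : x - f x < p for all x in D with x < y } *)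
Definition pnext (x1 : R) (x2 : \bar R) (f : R -> R) (p : \bar R) : \bar R :=
  ereal_sup [set y : \bar R | y <= x2 /\
     forall x : R, domD x1 x2 x -> x%:E < y -> (x - f x)%:E < p].

(* This gives p_0 = x1,
   p_{beta+1} = pnext p_beta, and p_alpha = sup_{beta<alpha} p_beta at limits. *)
Fixpoint pt (x1 : R) (x2 : \bar R) (f : R -> R) (a : Ord) : \bar R :=
  match a with
  | olim A g => maxe x1%:E
      (ereal_sup [set pnext x1 x2 f (pt x1 x2 f (g i)) | i in [set: A]])
  end.

Definition Ival (x1 : R) (x2 : \bar R) (f : R -> R) (a : Ord) : set R :=
  [set x : R | pt x1 x2 f a <= x%:E /\ x%:E < pt x1 x2 f (osucc a)].

End OrdDecr.

(* Order type of a family S of pairwise disjoint sets of reals, ordered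
   by position on the line, is at most the ordinal d: S order-embeds
   into the ordinals below d. *)
Definition set_before (R : realType) (I J : set R) : Prop :=
  forall x y, I x -> J y -> (x < y)%R.

Definition otype_le (R : realType) (S : set (set R)) (d : Ord) : Prop :=
  exists g : set R -> Ord,
    (forall I, S I -> olt (g I) d) /\
    (forall I J, S I -> S J -> set_before I J -> olt (g I) (g J)).

(* Main.v *)
Require Import Defs.
From HB Require Import structures.
From mathcomp Require Import all_boot all_order all_algebra.
From mathcomp Require Import boolp classical_sets reals constructive_ereal ereal.
From Stdlib Require Import ClassicalEpsilon.

Import Order.TTheory GRing.Theory Num.Theory.
Local Open Scope classical_set_scope.
Local Open Scope ring_scope.


Lemma oleP (A : Type) (f : A -> Ord) y : ole (olim f) y <-> forall a, olt (f a) y.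
Proof. by case: y. Qed.

Lemma oleP' x y : (forall i : oidx x, olt (ochild i) y) -> ole x y.
Proof. by case: x => A f H; apply/oleP. Qed.

Lemma ole_refl x : ole x x.
Proof. elim: x => A f IH; apply/oleP => a; exists a; exact: IH. Qed.

Lemma ole_trans x y z : ole x y -> ole y z -> ole x z.
Proof.
elim: x y z => A f IH [B g] [C h] /oleP H1 /oleP H2; apply/oleP => a.
case: (H1 a) => b Hb; case: (H2 b) => c Hc; exists c; exact: IH Hb Hc.
Qed.

Lemma olt_child (A : Type) (f : A -> Ord) a : olt (f a) (olim f).
Proof. exists a; exact: ole_refl. Qed.

Lemma olt_ole x y : olt x y -> ole x y.
Proof.
elim: x y => A f IH [B g] [b Hb]; apply/oleP => a; exists b.
case: (g b) Hb => C h /oleP H; exact: IH (H a).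
Qed.

Lemma ole_olt_trans x y z : ole x y -> olt y z -> olt x z.
Proof. case: z => C h H; rewrite /olt => -[c Hc]; exists c; exact: ole_trans H Hc. Qed.

Lemma olt_ole_trans x y z : olt x y -> ole y z -> olt x z.
Proof.
case: y => B g [b Hb] /oleP H; case: z H => C h H; case: (H b) => c Hc.
exists c; exact: ole_trans Hb Hc.
Qed.

Lemma olt_trans x y z : olt x y -> olt y z -> olt x z.
Proof. move=> /olt_ole H; exact: ole_olt_trans. Qed.

Lemma olt_irr x : ~ olt x x.
Proof.
elim: x => A f IH [a /oleP Ha]; exact: IH (Ha a).
Qed.

Lemma olt_total x y : olt y x \/ ole x y.
Proof.
elim: x y => A f IH y.
case: (EM (olt y (olim f))) => [Hy|Hn]; first by left.
right; apply/oleP => a.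
have Hn' : ~ ole y (f a) by move=> H; apply: Hn; exists a.
case: y Hn Hn' => B g _ Hn'.
have [b Hb] : exists b, ~ olt (g b) (f a).
  apply: contrapT => H; apply: Hn'; apply/oleP => b.
  by apply: contrapT => H'; apply: H; exists b.
case: (IH a (g b)) => // H; exists b; exact: H.
Qed.

Lemma osucc_le x y : olt x y -> ole (osucc x) y.
Proof. by move=> H; apply/oleP. Qed.

Lemma ole_osup (B : Type) (h : B -> Ord) j : ole (h j) (osup h).
Proof.
apply: oleP' => i; exists (existT _ j i); exact: ole_refl.
Qed.

Lemma ole_oadd a b : ole a (oadd a b).
Proof.
case: a b => A f [B g]; apply/oleP => i; exists (inl i); exact: ole_refl.
Qed.
Arguments ole_trans {x y z}.
Arguments ole_olt_trans {x y z}.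
Arguments olt_ole_trans {x y z}.
Arguments olt_trans {x y z}.
Arguments olt_ole {x y}.
Arguments osucc_le {x y}.


Section Pts.
Variable R : realType.
Variables (x1 : R) (x2 : \bar R) (f : R -> R).
Hypothesis Hx : (x1%:E < x2)%E.
Hypothesis Hod : ordinal_decreasing (domD x1 x2) f.
Hypothesis Hf : forall x, domD x1 x2 x -> 0 < f x.

Local Notation D := (domD x1 x2).
Local Notation pt := (pt x1 x2 f).
Local Notation pnext := (pnext x1 x2 f).
Local Open Scope ereal_scope.

Lemma pnext_mono p q : p <= q -> pnext p <= pnext q.
Proof.
move=> pq; apply: ereal_sup_le => y [y2 Hy]; split => // z Dz zy.
exact: lt_le_trans (Hy z Dz zy) pq.
Qed.

Lemma pnext_le p : pnext p <= x2.
Proof. by apply: ge_ereal_sup => y [] . Qed.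

Lemma pt_ge a : x1%:E <= pt a.
Proof. by case: a => A g /=; rewrite le_max lexx. Qed.

Lemma pt_le a : pt a <= x2.
Proof.
case: a => A g /=; rewrite ge_max (ltW Hx) /=.
by apply: ge_ereal_sup => y [i _ <-]; exact: pnext_le.
Qed.

Lemma pt_child (A : Type) (g : A -> Ord) i : pnext (pt (g i)) <= pt (olim g).
Proof.
rewrite /= le_max; apply/orP; right; apply: ereal_sup_ubound; by exists i.
Qed.

Lemma pt_mono a b : ole a b -> pt a <= pt b.
Proof.
elim: a b => A g IH [B h] /oleP H /=.
rewrite ge_max le_max lexx /=.
rewrite le_max; apply/orP; right.
apply: ge_ereal_sup => y [i _ <-].
case: (H i) => j Hj.
apply: le_trans (pnext_mono _ _ (IH i _ Hj)) _.
apply: ereal_sup_ubound; by exists j.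
Qed.

Lemma pnext_ge p : p <= x2 -> p <= pnext p.
Proof.
move=> px2; apply: ereal_sup_ubound; split => // z Dz zp.
apply: lt_trans zp; rewrite lte_fin ltrBlDr ltrDl; exact: Hf.
Qed.

Lemma pnext_gt (p : R) : (x1 <= p)%R -> p%:E < x2 -> p%:E < pnext p%:E.
Proof.
move=> Hp1 Hp2; rewrite ltNge; apply/negP => Hle.
have Hex : forall y : R, (p < y)%R -> y%:E <= x2 ->
    exists z, D z /\ (z < y)%R /\ (p <= z - f z)%R.
  move=> y py yx2; apply: contrapT => Hn.
  have : y%:E <= pnext p%:E.
    apply: ereal_sup_ubound; split => // z Dz zy; rewrite lte_fin ltNge.
    apply/negP => H; apply: Hn; exists z; split => //; split => //.
  move=> /le_trans /(_ Hle); rewrite lee_fin leNgt py //.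
have Hs : forall z, exists w, (D z /\ (p < z)%R) ->
    (D w /\ (p < w)%R /\ (w < z)%R /\ (f w < f z)%R).
  move=> z; case: (EM (D z /\ (p < z)%R)) => [[Dz pz]|Hn]; last first.
    by exists z => H; case: (Hn H).
  have fz := Hf z Dz.
  have [w [Dw [wy pw]]] : exists w, D w /\ (w < Num.min z (p + f z))%R /\ (p <= w - f w)%R.
    apply: Hex; first by rewrite lt_min pz ltrDl fz.
    apply: le_trans (ltW Dz.2); rewrite lee_fin ge_min lexx //.
  have fw := Hf w Dw.
  exists w => _; split => //.
  move: wy; rewrite lt_min => /andP[wz wp].
  have pw' : (p < w)%R by apply: le_lt_trans pw _; rewrite ltrBlDr ltrDl.
  split => //; split => //.
  move: pw wp; rewrite lerBrDr => pw wp.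
  by rewrite -(ltrD2l p); exact: le_lt_trans pw wp.
case: (@choice _ _ _ Hs) => F HF.
have [y py yx2] : exists2 y, (p < y)%R & y%:E <= x2.
  move: Hp2; case: (x2) => [r|_|//].
    by rewrite lte_fin => H; exists r.
  by exists (p + 1)%R; rewrite ?leey // ltrDl.
have [z0 [Dz0 [_ pz0]]] := Hex y py yx2.
have pz0' : (p < z0)%R by apply: le_lt_trans pz0 _; rewrite ltrBlDr ltrDl; exact: Hf.
pose u n := iter n F z0.
have Hu : forall n, D (u n) /\ (p < u n)%R.
  elim => [|n [Dn pn]] //; by case: (HF _ (conj Dn pn)) => ? [] ?.
apply: Hod; exists u => n; case: (Hu n) => Dn pn.
case: (HF _ (conj Dn pn)) => _ [_ [H1 H2]]; by split.
Qed.

End Pts.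
Arguments pnext_mono {R x1 x2 f p q}.
Arguments pnext_le {R x1 x2 f}.
Arguments pt_ge {R x1 x2 f}.
Arguments pt_le {R x1 x2 f} Hx.
Arguments pt_child {R x1 x2 f A g}.
Arguments pt_mono {R x1 x2 f a b}.
Arguments pnext_ge {R x1 x2 f} Hf {p}.
Arguments pnext_gt {R x1 x2 f} Hod Hf {p}.


Section Heights.
Variable R : realType.
Variables (E : set R) (h : R -> R).

Local Notation rb := (fun x y : R => (y < x) && (h y < h x)).

Lemma sorted_rcons_ne (s : seq R) y : s != [::] ->
  sorted rb (rcons s y) = sorted rb s && rb (last 0 s) y.
Proof. by case: s => [//|z s] _; rewrite /= rcons_path. Qed.

Lemma H_child s o t : IsHeight E h s o -> tchild E h s t ->
  exists c, IsHeight E h t c /\ olt c o.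
Proof.
case=> s0 g Hg Ht; exists (g (exist _ t Ht)); split; first exact: (Hg (exist _ t Ht)).
exact: olt_child.
Qed.

Lemma H_uniq s a : IsHeight E h s a -> forall s' b, IsHeight E h s' b ->
  bad_list E h s' -> s != [::] -> s' != [::] -> last 0 s = last 0 s' -> ole a b.
Proof.
elim=> {s a} s g Hg IH s' b Hb; case: Hb => {s' b} s0 g' Hg' Bs0 ns ns0 Hl.
apply/oleP => -[t Ht].
have Ht0 := Ht; case: Ht0 => -[Et St] [y ety].
have Ht' : tchild E h s0 (rcons s0 y).
  split; last by exists y.
  split.
    move=> z; rewrite mem_rcons in_cons => /orP[/eqP ->|zs0].
      by apply: Et; rewrite ety mem_rcons mem_head.
    exact: Bs0.1.
  rewrite sorted_rcons_ne // Bs0.2 /= -Hl.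
  by move: St; rewrite ety sorted_rcons_ne // => /andP[].
exists (exist _ (rcons s0 y) Ht').
move: (IH (exist _ t Ht)) => H; apply: (H _ _ (Hg' (exist _ (rcons s0 y) Ht'))) (Ht'.1) _ _ _ => /=.
- by rewrite ety; case: (s).
- by case: (s0).
- by rewrite ety !last_rcons.
Qed.

Lemma H_exists : ordinal_decreasing E h -> exists c, IsHeight E h [::] c.
Proof.
move=> Hod; apply: contrapT => H0.
have Hstep : forall s, exists t, ~ (exists c, IsHeight E h s c) ->
    tchild E h s t /\ ~ (exists c, IsHeight E h t c).
  move=> s; case: (EM (exists t, tchild E h s t /\ ~ (exists c, IsHeight E h t c))).
    by move=> [t Ht]; exists t.
  move=> Hn; exists s => Hs; exfalso; apply: Hs.
  have Hall : forall t : {t | tchild E h s t}, exists c, IsHeight E h (sval t) c.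
    move=> [t Ht] /=; apply: contrapT => Hc; apply: Hn; by exists t.
  case: (@choice _ _ _ Hall) => g Hg.
  by exists (olim g); constructor.
case: (@choice _ _ _ Hstep) => F HF.
pose S n := iter n F [::].
have HS : forall n, ~ (exists c, IsHeight E h (S n) c) /\ tchild E h (S n) (S n.+1).
  elim => [|n [Hn _]]; first by case: (HF _ H0).
  by case: (HF _ Hn) => Ht Hn'; split => //; case: (HF _ Hn').
pose u n := last 0 (S n.+1).
apply: Hod; exists u => n.
case: (HS n) => _ [[B1 _] [x Hx]].
case: (HS n.+1) => _ [[_ B2] [y Hy]].
split.
  by apply: B1; rewrite /u Hx last_rcons mem_rcons mem_head.
move: B2; rewrite Hy sorted_rcons_ne; last by rewrite -/(S n.+1) Hx; case: (S n).
move=> /andP[_ /andP[H1 H2]].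
by rewrite /u Hy last_rcons; split.
Qed.

End Heights.
Arguments sorted_rcons_ne {R h s y}.
Arguments H_child {R E h s o t}.
Arguments H_uniq {R E h s a} _ {s' b}.
Arguments H_exists {R E h}.


Section Main.
Variable R : realType.
Variables (x1 : R) (x2 : \bar R) (f : R -> R).
Hypothesis Hx : (x1%:E < x2)%E.
Hypothesis Hod : ordinal_decreasing (domD x1 x2) f.
Hypothesis Hf : forall x, domD x1 x2 x -> 0 < f x.

Local Notation D := (domD x1 x2).
Local Notation pt := (pt x1 x2 f).
Local Notation pnext := (pnext x1 x2 f).

Definition rho (x : R) : Ord := epsilon (inhabits ozero) (IsHeight D f [:: x]).
Local Notation o := (o_tree D f).

Lemma Ho : IsHeight D f [::] o.
Proof. exact: epsilon_spec (H_exists Hod). Qed.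

Lemma rho_spec x : D x -> IsHeight D f [:: x] (rho x) /\ olt (rho x) o.
Proof.
move=> Dx.
have Ht : tchild D f [::] [:: x].
  split; last by exists x.
  by split => // z; rewrite inE => /eqP ->.
have [c [Hc Hco]] := H_child Ho Ht.
have Hr : IsHeight D f [:: x] (rho x) by apply: epsilon_spec; exists c.
split => //; apply: ole_olt_trans Hco.
apply: (H_uniq Hr Hc) => //; by case: Ht.
Qed.

Lemma rho_lt x y : D x -> D y -> y < x -> f y < f x -> olt (rho y) (rho x).
Proof.
move=> Dx Dy yx fyx.
have Ht : tchild D f [:: x] [:: x; y].
  split; last by exists y.
  split; last by rewrite /= yx fyx.
  by move=> z; rewrite !inE => /orP[] /eqP ->.
have [c [Hc Hco]] := H_child (rho_spec x Dx).1 Ht.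
apply: ole_olt_trans Hco.
apply: (H_uniq (rho_spec y Dy).1 Hc) => //; by case: Ht.
Qed.

Lemma pt_oadd_omega a n : (pnext (pt (oadd a (ofin n))) <= pt (oadd a oomega))%E.
Proof. case: a => A F; exact: (pt_child (inr n)). Qed.

Lemma pt_oadd_succ a b : (pnext (pt (oadd a b)) <= pt (oadd a (osucc b)))%E.
Proof. case: a => A F; exact: (pt_child (inr tt)). Qed.

Lemma pt_fin a (y : R) : (pt a <= y%:E)%E -> exists r : R, pt a = r%:E.
Proof.
move=> H; move: H (@pt_ge _ x1 x2 f a); case: (pt a) => [r| |] //; by exists r.
Qed.


Lemma Kmain b : forall x, D x -> (pt (omul oomega b) <= x%:E)%E -> ole b (rho x).
Proof.
elim: b => B g IH x Dx Hpt; apply/oleP => j.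
set lam := omul oomega (g j).
have Hq : (pt (oadd lam oomega) <= x%:E)%E.
  apply: le_trans Hpt; apply: pt_mono.
  have HH := @ole_osup B (fun y => oadd (omul oomega (g y)) oomega) j; exact HH.
suff [y [Dy [Hly [yx fyx]]]] : exists y, D y /\ (pt lam <= y%:E)%E /\ y < x /\ f y < f x.
  exact: ole_olt_trans (IH j y Dy Hly) (rho_lt x y Dx Dy yx fyx).
apply: contrapT => Hn.
have Hn' : forall y, D y -> (pt lam <= y%:E)%E -> y < x -> f x <= f y.
  move=> y Dy Hy yx; rewrite leNgt; apply/negP => H; apply: Hn; by exists y.
pose r n := pt (oadd lam (ofin n)).
have Hx2 : (x%:E < x2)%E := Dx.2.
have Hrx : forall n, exists r0 : R, r n = r0%:E /\ r0 < x /\ (pt lam <= r0%:E)%E.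
  move=> n.
  have H1 : (r n <= pnext (r n))%E := pnext_ge Hf (pt_le Hx _).
  have H2 := pt_oadd_omega lam n.
  have H3 : (r n <= x%:E)%E := le_trans H1 (le_trans H2 Hq).
  have [r0 Hr0] := pt_fin _ _ H3.
  exists r0; split => //; split.
    have : (r0%:E < pnext r0%:E)%E.
      apply: (pnext_gt Hod Hf).
        rewrite -lee_fin -Hr0; exact: pt_ge.
      rewrite -Hr0; exact: le_lt_trans H3 Hx2.
    rewrite -lte_fin -Hr0 => H; exact: lt_le_trans H (le_trans H2 Hq).
  rewrite -Hr0; apply: pt_mono; exact: ole_oadd.
have [r00 [Er00 [r00x Hl00]]] := Hrx 0%N.
have [l Hl] := pt_fin _ _ Hl00.
set c := f x.
have c0 : 0 < c := Hf x Dx.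
have Hgrow : forall n r1, r n = r1%:E -> l + n%:R * c <= r1.
  elim => [|n IHn] r1 Er1.
    have : (pt lam <= r 0%N)%E by apply: pt_mono; exact: ole_oadd.
    by rewrite Er1 Hl lee_fin mul0r addr0.
  have [r0 [Er0 [r0x Hlr0]]] := Hrx n.
  have [r2 [Er2 [r2x _]]] := Hrx n.+1.
  move: Er2; rewrite Er1 => -[E2]; subst r2.
  have Hy : ((Num.min (r0 + c) x)%:E <= pnext r0%:E)%E.
    apply: ereal_sup_ubound; split.
      apply: le_trans (ltW Hx2); by rewrite lee_fin ge_min lexx orbT.
    move=> z Dz; rewrite lte_fin lt_min => /andP[zr zx]; rewrite lte_fin.
    have fz := Hf z Dz.
    move: Hlr0; rewrite Hl lee_fin => Hlr0.
    case: (EM (z < l)) => zl.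
      apply: lt_le_trans Hlr0; have H : z - f z < z by rewrite ltrBlDr ltrDl.
      exact: lt_trans H zl.
    move/negP: zl; rewrite -leNgt => zl.
    have cz : c <= f z by apply: (Hn' z Dz _ zx); rewrite Hl lee_fin.
    rewrite ltrBlDr; apply: lt_le_trans zr _; by rewrite lerD2l.
  have : ((Num.min (r0 + c) x)%:E <= r n.+1)%E.
    apply: le_trans Hy _; rewrite -Er0; exact: pt_oadd_succ.
  rewrite Er1 lee_fin ge_min => /orP[H|H]; last first.
    by move: (le_lt_trans H r2x); rewrite ltxx.
  have := IHn r0 Er0.
  rewrite -[n.+1]addn1 natrD mulrDl mul1r.
  move=> H'; apply: le_trans H; by rewrite addrA lerD2r.
have lx : l < x by move: Hl00; rewrite Hl lee_fin => H; exact: le_lt_trans H r00x.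
have M0 : 0 <= (x - l) / c by rewrite divr_ge0 // ?subr_ge0 ?ltW.
have := archi_boundP M0.
set n := Num.bound _.
rewrite ltr_pdivrMr // ltrBlDl => Hn2.
have [r0 [Er0 [r0x _]]] := Hrx n.
have H := Hgrow n r0 Er0.
by move: (lt_le_trans Hn2 H) => /(lt_trans r0x); rewrite ltxx.
Qed.

Lemma main_all :
  ((forall a : Ord, Ival x1 x2 f a `<=` D) /\
   (forall x, D x -> exists a : Ord, Ival x1 x2 f a x) /\
   (forall a b : Ord, olt a b -> Ival x1 x2 f a `&` Ival x1 x2 f b = set0)) /\
  otype_le [set I : set R | exists a : Ord, I = Ival x1 x2 f a /\ I !=set0]
    (omul oomega (osucc o)).
Proof.
have HD : forall a : Ord, Ival x1 x2 f a `<=` D.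
  move=> a z [H1 H2]; split.
    rewrite -lee_fin; exact: le_trans (pt_ge a) H1.
  exact: lt_le_trans H2 (pt_le Hx _).
split; [split; [exact: HD|split]|].
- move=> x Dx.
  pose T := {r : R | exists a, pt a = r%:E /\ r <= x}.
  pose sel (t : T) : Ord := sval (cid (svalP t)).
  have Hsel : forall t, pt (sel t) = (sval t)%:E /\ sval t <= x.
    move=> t; exact: (svalP (cid (svalP t))).
  pose b := olim sel.
  have Hb : (x%:E < pt b)%E.
    rewrite ltNge; apply/negP => Hle.
    have [r0 Hr0] := pt_fin _ _ Hle.
    have Hr0x : r0 <= x by rewrite -lee_fin -Hr0.
    pose t : T := exist _ r0 (ex_intro _ b (conj Hr0 Hr0x)).
    have H1 : (pnext (pt (sel t)) <= pt b)%E := pt_child t.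
    rewrite (Hsel t).1 Hr0 in H1.
    have H2 : (r0%:E < pnext r0%:E)%E.
      apply: (pnext_gt Hod Hf).
        rewrite -lee_fin -Hr0; exact: pt_ge.
      apply: le_lt_trans (Dx.2); by rewrite lee_fin.
    by move: (lt_le_trans H2 H1); rewrite ltxx.
  move: Hb; rewrite /= lt_max => /orP[H|H].
    by move: (Dx.1); rewrite leNgt -lte_fin H.
  case: (ereal_sup_gt H) => _ [t _ <-] Ht.
  exists (sel t); split.
    by rewrite (Hsel t).1 lee_fin; exact: (Hsel t).2.
  apply: lt_le_trans Ht _; exact: (pt_child (g := fun _ : unit => sel t) tt).
- move=> a b ab; apply/seteqP; split => [z [[_ H1] [H2 _]]|z []].
  have H3 : (pt (osucc a) <= pt b)%E := pt_mono (osucc_le ab).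
  by move: (lt_le_trans H1 (le_trans H3 H2)); rewrite ltxx.
pose gI (I : set R) : Ord := epsilon (inhabits ozero) (fun a => I = Ival x1 x2 f a).
have HgI : forall I, (exists a : Ord, I = Ival x1 x2 f a /\ I !=set0) ->
    I = Ival x1 x2 f (gI I) /\ I !=set0.
  move=> I [a [EI ne]]; split => //.
  exact: (@epsilon_spec _ (inhabits ozero) (fun a => I = Ival x1 x2 f a) (ex_intro _ a EI)).
exists gI; split.
  move=> I SI; case: (HgI I SI) => EI [z Iz].
  case: (olt_total (omul oomega (osucc o)) (gI I)) => // Hle; exfalso.
  rewrite EI in Iz; have Dz := HD _ _ Iz; case: Iz => Hz1 Hz2.
  have := Kmain (osucc o) z Dz (le_trans (pt_mono Hle) Hz1).
  move=> /oleP /(_ tt) Ho'.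
  case: (rho_spec z Dz) => _ H; exact: olt_irr (olt_trans Ho' H).
move=> I J SI SJ HIJ.
case: (HgI I SI) (HgI J SJ) => EI [xI HxI] [EJ [yJ HyJ]].
case: (olt_total (gI J) (gI I)) => // Hba; exfalso.
have Hxy := HIJ _ _ HxI HyJ.
have HyI : I yJ.
  case: (olt_total (gI I) (gI J)) => Hab.
    have H3 : (pt (osucc (gI J)) <= pt (gI I))%E := pt_mono (osucc_le Hab).
    rewrite EI in HxI; rewrite EJ in HyJ; case: HxI => HxI _; case: HyJ => _ HyJ.
    have := lt_le_trans HyJ (le_trans H3 HxI); rewrite lte_fin => H4.
    by move: (lt_trans H4 Hxy); rewrite ltxx.
  have H3 : (pt (gI I) <= pt (gI J))%E := pt_mono Hab.
  have H4 : (pt (osucc (gI J)) <= pt (osucc (gI I)))%E.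
    by apply: pt_mono; apply/oleP => -[]; exists tt.
  rewrite EI; rewrite EJ in HyJ; case: HyJ => H5 H6; split.
    exact: le_trans H3 H5.
  exact: lt_le_trans H6 H4.
by move: (HIJ _ _ HyI HyJ); rewrite ltxx.
Qed.

End Main.

Theorem lemma6 (R : realType) (x1 : R) (x2 : \bar R) (f : R -> R) :
  (x1%:E < x2)%E ->
  ordinal_decreasing (domD x1 x2) f ->
  (forall x, domD x1 x2 x -> 0 < f x) ->
  (* the intervals I_alpha partition D *)
  ((forall a : Ord, Ival x1 x2 f a `<=` domD x1 x2) /\
   (forall x, domD x1 x2 x -> exists a : Ord, Ival x1 x2 f a x) /\
   (forall a b : Ord, olt a b -> Ival x1 x2 f a `&` Ival x1 x2 f b = set0)) /\
  (* the ordinal number of nonempty intervals is <= omega * (o(f|_D) + 1) *)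
  otype_le [set I : set R | exists a : Ord, I = Ival x1 x2 f a /\ I !=set0]
    (omul oomega (osucc (o_tree (domD x1 x2) f))).
Proof.
exact (@main_all R x1 x2 f).
Qed.
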